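(* For any $g>0$, $\kappa>0$, $\mathtt h\in(0,\infty]$, any lattice $\Gamma\subset\mathbb R^2$ and any $c_*\in\mathbb R^2$, any line through the origin contains at most two elements of the set $\mathcal V=\{j\in\Gamma'\setminus\{0\}:\omega(j)=c_*\cdot j\}$; i.e. $\mathcal V$ contains at most two pairwise collinear vectors.
   Context: $\Gamma'$ is the dual lattice of $\Gamma$ (a lattice in $\mathbb R^2$), and $\omega(\xi)=\sqrt{(g+\kappa|\xi|^2)|\xi|\tanh(\mathtt h|\xi|)}$ for $\xi\in\mathbb R^2$, with $\tanh(\mathtt h|\xi|)$ replaced by $1$ when $\mathtt h=\infty$. *)

(* Defs.v *)
From Stdlib Require Import Reals.
From Coquelicot Require Import Rbar.
Open Scope R_scope.

Definition vec2 := (R * R)%type.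

Definition dot (x y : vec2) : R := fst x * fst y + snd x * snd y.

Definition vnorm (x : vec2) : R := sqrt (fst x ^ 2 + snd x ^ 2).

Definition vscale (t : R) (x : vec2) : vec2 := (t * fst x, t * snd x).

Definition vadd (x y : vec2) : vec2 := (fst x + fst y, snd x + snd y).

Definition tanh (x : R) : R := (exp x - exp (- x)) / (exp x + exp (- x)).

Definition basis2 (e1 e2 : vec2) : Prop :=
  fst e1 * snd e2 - snd e1 * fst e2 <> 0.

Definition lattice (e1 e2 : vec2) : vec2 -> Prop :=
  fun x => exists m n : Z, x = vadd (vscale (IZR m) e1) (vscale (IZR n) e2).

Definition dual_lattice (Gamma : vec2 -> Prop) : vec2 -> Prop :=
  fun j => forall gam, Gamma gam -> exists k : Z, dot j gam = IZR k.

Definition depth_factor (h : Rbar) (xi : vec2) : R :=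
  match h with
  | Finite r => tanh (r * vnorm xi)
  | _ => 1
  end.

Definition omega (g kappa : R) (h : Rbar) (xi : vec2) : R :=
  sqrt ((g + kappa * vnorm xi ^ 2) * vnorm xi * depth_factor h xi).

Definition resonant_set (g kappa : R) (h : Rbar) (Gamma : vec2 -> Prop)
    (cstar : vec2) : vec2 -> Prop :=
  fun j => dual_lattice Gamma j /\ j <> (0, 0) /\ omega g kappa h j = dot cstar j.

Definition on_line (u x : vec2) : Prop := exists t : R, x = vscale t u.

(* Main.v *)
Require Import Defs.
From Stdlib Require Import Reals Lra.
From Coquelicot Require Import Coquelicot.
Open Scope R_scope.

Lemma rolle (f df : R -> R) a b :
  (forall x, is_derive f x (df x)) -> a < b -> f a = f b ->
  exists c, a < c < b /\ df c = 0.
Proof.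
  intros Hd Hab Hf.
  destruct (MVT_cor2 f df a b Hab) as [c [H1 H2]].
  { intros c _. apply is_derive_Reals. apply Hd. }
  exists c. split; [exact H2|].
  assert (df c * (b - a) = 0) by lra.
  apply Rmult_integral in H. destruct H; [assumption|lra].
Qed.

Lemma der_mul (e de f df : R -> R) x :
  is_derive e x (de x) -> is_derive f x (df x) ->
  is_derive (fun t => e t * f t) x (de x * f x + e x * df x).
Proof.
  intros H1 H2. pose proof (is_derive_mult _ _ _ _ _ H1 H2) as H.
  simpl in H. apply H. intros; apply Rmult_comm.
Qed.

Lemma der_v (f f1 : R -> R) :
  (forall x, is_derive f x (f1 x)) -> forall x,
  is_derive (fun t => exp (- t) * f t) x (exp (- x) * (f1 x - f x)).
Proof.
  intros Hd x.
  replace (exp (- x) * (f1 x - f x)) with ((fun t => - exp (- t)) x * f x + exp (-x) * f1 x) by ring.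
  apply (der_mul (fun t => exp (-t)) (fun t => - exp (-t))); [|apply Hd]. auto_derive; [exact I| ring].
Qed.

Lemma der_w (f f1 f2 : R -> R) :
  (forall x, is_derive f x (f1 x)) -> (forall x, is_derive f1 x (f2 x)) -> forall x,
  is_derive (fun t => exp t * (f1 t - f t)) x (exp x * (f2 x - f x)).
Proof.
  intros Hd Hd1 x.
  replace (exp x * (f2 x - f x)) with (exp x * (f1 x - f x) + exp x * (f2 x - f1 x)) by ring.
  apply (der_mul exp exp (fun t => f1 t - f t) (fun t => f2 t - f1 t)); [auto_derive; [exact I|ring]|].
  apply (is_derive_minus f1 f); auto.
Qed.

Lemma exp_neq0 x : exp x <> 0.
Proof. pose proof (exp_pos x); lra. Qed.

Lemma vzero (f f1 : R -> R) a b :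
  (forall x, is_derive f x (f1 x)) -> a < b -> f a = 0 -> f b = 0 ->
  exists p, a < p < b /\ f1 p - f p = 0.
Proof.
  intros Hd Hab Ha Hb.
  destruct (rolle _ _ a b (der_v f f1 Hd) Hab) as [p [Hp Hp0]].
  { rewrite Ha, Hb; ring. }
  exists p; split; auto.
  apply Rmult_integral in Hp0; destruct Hp0 as [H|H]; auto.
  exfalso; exact (exp_neq0 _ H).
Qed.

Lemma wzero (f f1 f2 : R -> R) a b :
  (forall x, is_derive f x (f1 x)) -> (forall x, is_derive f1 x (f2 x)) ->
  a < b -> f1 a - f a = 0 -> f1 b - f b = 0 ->
  exists p, a < p < b /\ f2 p - f p = 0.
Proof.
  intros Hd Hd1 Hab Ha Hb.
  destruct (rolle _ _ a b (der_w f f1 f2 Hd Hd1) Hab) as [p [Hp Hp0]].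
  { rewrite Ha, Hb; ring. }
  exists p; split; auto.
  apply Rmult_integral in Hp0; destruct Hp0 as [H|H]; auto.
  exfalso; exact (exp_neq0 _ H).
Qed.

Lemma three (f f1 f2 : R -> R) a b c :
  (forall x, is_derive f x (f1 x)) -> (forall x, is_derive f1 x (f2 x)) ->
  a < b -> b < c -> f a = 0 -> f b = 0 -> f c = 0 ->
  exists r, a < r < c /\ f2 r - f r = 0.
Proof.
  intros Hd Hd1 Hab Hbc Ha Hb Hc.
  destruct (vzero f f1 a b Hd Hab Ha Hb) as [p [Hp Hp0]].
  destruct (vzero f f1 b c Hd Hbc Hb Hc) as [q [Hq Hq0]].
  destruct (wzero f f1 f2 p q Hd Hd1 ltac:(lra) Hp0 Hq0) as [r [Hr Hr0]].
  exists r; split; [lra|auto].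
Qed.

Lemma four (f f1 f2 : R -> R) a b c d :
  (forall x, is_derive f x (f1 x)) -> (forall x, is_derive f1 x (f2 x)) ->
  a < b -> b < c -> c < d -> f a = 0 -> f b = 0 -> f c = 0 -> f d = 0 ->
  exists r1 r2, a < r1 /\ r1 < r2 /\ r2 < d /\ f2 r1 - f r1 = 0 /\ f2 r2 - f r2 = 0.
Proof.
  intros Hd Hd1 Hab Hbc Hcd Ha Hb Hc Hdd.
  destruct (vzero f f1 a b Hd Hab Ha Hb) as [p [Hp Hp0]].
  destruct (vzero f f1 b c Hd Hbc Hb Hc) as [q [Hq Hq0]].
  destruct (vzero f f1 c d Hd Hcd Hc Hdd) as [s [Hs Hs0]].
  destruct (wzero f f1 f2 p q Hd Hd1 ltac:(lra) Hp0 Hq0) as [r [Hr Hr0]].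
  destruct (wzero f f1 f2 q s Hd Hd1 ltac:(lra) Hq0 Hs0) as [r' [Hr' Hr0']].
  exists r, r'; repeat split; try lra; auto.
Qed.

Section K.
Variables A B C : R.
Definition K x := (A + B * x ^ 2) * sinh x - C * x * cosh x.
Definition K1 x := (A - C + B * x ^ 2) * cosh x + (2 * B - C) * x * sinh x.
Definition K2 x := (A + 2 * B - 2 * C + B * x ^ 2) * sinh x + (4 * B - C) * x * cosh x.
Definition M x := K2 x - K x.
Definition M1 x := (6 * B - 2 * C) * cosh x + 4 * B * x * sinh x.
Definition M2 x := (10 * B - 2 * C) * sinh x + 4 * B * x * cosh x.

Lemma dK x : is_derive K x (K1 x).
Proof. unfold K, K1, sinh, cosh. auto_derive; [exact I|]. field. Qed.
Lemma dK1 x : is_derive K1 x (K2 x).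
Proof. unfold K1, K2, sinh, cosh. auto_derive; [exact I|]. field. Qed.
Lemma dM x : is_derive M x (M1 x).
Proof. unfold M, K2, K, M1, sinh, cosh. auto_derive; [exact I|]. field. Qed.
Lemma dM1 x : is_derive M1 x (M2 x).
Proof. unfold M1, M2, sinh, cosh. auto_derive; [exact I|]. field. Qed.

Lemma K_atmost (Bpos : 0 < B) x1 x2 x3 :
  0 < x1 -> x1 < x2 -> x2 < x3 -> K x1 = 0 -> K x2 = 0 -> K x3 = 0 -> False.
Proof.
  intros H1 H2 H3 Z1 Z2 Z3.
  assert (K0 : K 0 = 0). { unfold K, sinh. rewrite Ropp_0. rewrite Rminus_diag. unfold Rdiv. rewrite Rmult_0_l, Rmult_0_r. rewrite Rmult_0_r, Rmult_0_l. apply Rminus_diag. }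
  destruct (four K K1 K2 0 x1 x2 x3 dK dK1 H1 H2 H3 K0 Z1 Z2 Z3)
    as [r1 [r2 [R1 [R2 [R3 [E1 E2]]]]]].
  assert (M0 : M 0 = 0). { unfold M, K2, K, sinh. rewrite Ropp_0. field. }
  destruct (three M M1 M2 0 r1 r2 dM dM1 R1 R2 M0 E1 E2) as [s [Hs Es]].
  assert (E : M2 s - M s = 8 * B * sinh s) by (unfold M2, M, K2, K; ring).
  rewrite E in Es.
  assert (0 < sinh s).
  { unfold sinh. assert (exp (- s) < exp s) by (apply exp_increasing; lra). lra. }
  nra.
Qed.
End K.

Lemma sort3 (P : R -> Prop) :
  (forall a b c, 0 < a -> a < b -> b < c -> P a -> P b -> P c -> False) ->
  forall x1 x2 x3, 0 < x1 -> 0 < x2 -> 0 < x3 -> x1 <> x2 -> x1 <> x3 -> x2 <> x3 ->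
  P x1 -> P x2 -> P x3 -> False.
Proof.
  intros H x1 x2 x3 p1 p2 p3 d12 d13 d23 P1 P2 P3.
  destruct (Rtotal_order x1 x2) as [a|[a|a]]; [|contradiction|];
  destruct (Rtotal_order x1 x3) as [b|[b|b]]; try contradiction;
  destruct (Rtotal_order x2 x3) as [c|[c|c]]; try contradiction;
  first [ solve [apply (H x1 x2 x3); auto; lra] | solve [apply (H x1 x3 x2); auto; lra]
        | solve [apply (H x2 x1 x3); auto; lra] | solve [apply (H x2 x3 x1); auto; lra]
        | solve [apply (H x3 x1 x2); auto; lra] | solve [apply (H x3 x2 x1); auto; lra] ].
Qed.

Definition Dh (h : Rbar) (s : R) : R :=
  match h with Finite r => Defs.tanh (r * s) | _ => 1 end.

Lemma tanh_pos x : 0 < x -> 0 < Defs.tanh x.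
Proof.
  intros Hx. unfold Defs.tanh.
  assert (exp (- x) < exp x) by (apply exp_increasing; lra).
  pose proof (exp_pos x); pose proof (exp_pos (-x)).
  apply Rdiv_lt_0_compat; lra.
Qed.

Lemma Dh_pos h s : Rbar_lt 0 h -> 0 < s -> 0 < Dh h s.
Proof.
  intros Hh Hs. destruct h as [r| |]; simpl in *; try lra.
  apply tanh_pos. nra.
Qed.

Lemma sinh_tanh x : sinh x = Defs.tanh x * cosh x.
Proof.
  unfold sinh, Defs.tanh, cosh.
  pose proof (exp_pos x); pose proof (exp_pos (-x)).
  field. lra.
Qed.

Lemma final g kappa h n2 a2 :
  0 < g -> 0 < kappa -> Rbar_lt 0 h -> 0 < n2 ->
  forall s1 s2 s3, 0 < s1 -> 0 < s2 -> 0 < s3 -> s1 <> s2 -> s1 <> s3 -> s2 <> s3 ->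
  (g + kappa * s1 ^ 2) * Dh h s1 * n2 = s1 * a2 ->
  (g + kappa * s2 ^ 2) * Dh h s2 * n2 = s2 * a2 ->
  (g + kappa * s3 ^ 2) * Dh h s3 * n2 = s3 * a2 -> False.
Proof.
  intros Hg Hk Hh Hn s1 s2 s3 p1 p2 p3 d12 d13 d23 E1 E2 E3.
  destruct h as [r| |]; simpl in Hh; try lra; cbn [Dh] in E1, E2, E3.
  - set (P := fun x => K (g * n2) (kappa * n2 / (r * r)) (a2 / r) x = 0).
    apply (sort3 P) with (r * s1) (r * s2) (r * s3).
    + intros a b c Ha Hab Hbc Pa Pb Pc.
      assert (HB : 0 < kappa * n2 / (r * r)) by (apply Rdiv_lt_0_compat; nra).
      apply (K_atmost (g * n2) _ (a2 / r) HB a b c); auto.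
    + nra.
    + nra.
    + nra.
    + intro E. apply d12. apply Rmult_eq_reg_l with r; lra.
    + intro E. apply d13. apply Rmult_eq_reg_l with r; lra.
    + intro E. apply d23. apply Rmult_eq_reg_l with r; lra.
    + unfold P, K. rewrite sinh_tanh.
      transitivity (cosh (r * s1) * ((g + kappa * s1 ^ 2) * Defs.tanh (r * s1) * n2 - s1 * a2)).
      * field. lra.
      * rewrite E1. ring.
    + unfold P, K. rewrite sinh_tanh.
      transitivity (cosh (r * s2) * ((g + kappa * s2 ^ 2) * Defs.tanh (r * s2) * n2 - s2 * a2)).
      * field. lra.
      * rewrite E2. ring.
    + unfold P, K. rewrite sinh_tanh.
      transitivity (cosh (r * s3) * ((g + kappa * s3 ^ 2) * Defs.tanh (r * s3) * n2 - s3 * a2)).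
      * field. lra.
      * rewrite E3. ring.
  - assert (F1 : kappa * n2 * (s1 + s2) = a2).
    { apply Rmult_eq_reg_r with (s1 - s2); [|lra]. lra. }
    assert (F2 : kappa * n2 * (s1 + s3) = a2).
    { apply Rmult_eq_reg_r with (s1 - s3); [|lra]. lra. }
    apply d23. apply Rmult_eq_reg_l with (kappa * n2); [|nra]. lra.
Qed.

Lemma per_j g kappa h c u1 u2 t :
  0 < g -> 0 < kappa -> Rbar_lt 0 h -> 0 < u1 ^ 2 + u2 ^ 2 -> t <> 0 ->
  omega g kappa h (vscale t (u1, u2)) = dot c (vscale t (u1, u2)) ->
  let s := vnorm (vscale t (u1, u2)) in
  0 < s /\ s * s = t * t * (u1 ^ 2 + u2 ^ 2) /\ 0 < t * dot c (u1, u2) /\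
  (g + kappa * s ^ 2) * Dh h s * (u1 ^ 2 + u2 ^ 2) = s * (dot c (u1, u2)) ^ 2.
Proof.
  intros Hg Hk Hh Hn Ht Ho s.
  assert (Hq : 0 < (t * u1) ^ 2 + (t * u2) ^ 2).
  { assert (0 < t * t) by (destruct (Rlt_or_le t 0); nra). nra. }
  assert (Hs2 : s * s = t * t * (u1 ^ 2 + u2 ^ 2)).
  { unfold s, vnorm, vscale; simpl fst; simpl snd. rewrite sqrt_sqrt; [ring|lra]. }
  assert (Hs : 0 < s) by (unfold s, vnorm, vscale; simpl fst; simpl snd; apply sqrt_lt_R0; lra).
  assert (HD : depth_factor h (vscale t (u1, u2)) = Dh h s) by (destruct h; reflexivity).
  assert (HDp : 0 < Dh h s) by (apply Dh_pos; auto).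
  assert (Harg : 0 < (g + kappa * s ^ 2) * s * Dh h s).
  { apply Rmult_lt_0_compat; [apply Rmult_lt_0_compat|]; auto. nra. }
  assert (Hdot : dot c (vscale t (u1, u2)) = t * dot c (u1, u2)) by (unfold dot, vscale; simpl; ring).
  unfold omega in Ho. fold s in Ho. rewrite HD, Hdot in Ho.
  assert (Hop : 0 < t * dot c (u1, u2)) by (rewrite <- Ho; apply sqrt_lt_R0; auto).
  assert (Hsq : (g + kappa * s ^ 2) * s * Dh h s = (t * dot c (u1, u2)) ^ 2).
  { rewrite <- Ho. rewrite pow2_sqrt; lra. }
  repeat split; auto.
  apply Rmult_eq_reg_l with s; [|lra].
  set (a := dot c (u1, u2)) in *.
  transitivity ((g + kappa * s ^ 2) * s * Dh h s * (u1 ^ 2 + u2 ^ 2)); [ring|].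
  rewrite Hsq. transitivity ((s * s) * a ^ 2); [|ring]. rewrite Hs2. ring.
Qed.

Theorem mainTheorem4 :
  forall (g kappa : R) (h : Rbar) (e1 e2 cstar : vec2),
    0 < g -> 0 < kappa -> Rbar_lt 0 h ->
    basis2 e1 e2 ->
    forall u : vec2, u <> (0, 0) ->
    forall j1 j2 j3 : vec2,
      resonant_set g kappa h (lattice e1 e2) cstar j1 ->
      resonant_set g kappa h (lattice e1 e2) cstar j2 ->
      resonant_set g kappa h (lattice e1 e2) cstar j3 ->
      on_line u j1 -> on_line u j2 -> on_line u j3 ->
      j1 = j2 \/ j1 = j3 \/ j2 = j3.
Proof.
  intros g kappa h e1 e2 c Hg Hk Hh _ [u1 u2] Hu j1 j2 j3
    [_ [N1 O1]] [_ [N2 O2]] [_ [N3 O3]] [t1 ->] [t2 ->] [t3 ->].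
  assert (Hn : 0 < u1 ^ 2 + u2 ^ 2).
  { destruct (Req_dec u1 0) as [a|a]; [destruct (Req_dec u2 0) as [b|b]|].
    - subst; exfalso; apply Hu; reflexivity.
    - assert (0 < u2 * u2) by (destruct (Rlt_or_le u2 0); nra). nra.
    - assert (0 < u1 * u1) by (destruct (Rlt_or_le u1 0); nra). nra. }
  assert (Tn : forall t, vscale t (u1, u2) <> (0, 0) -> t <> 0).
  { intros t H E; apply H; subst; unfold vscale; simpl; f_equal; ring. }
  destruct (Req_dec t1 t2) as [->|d12]; [left; reflexivity|].
  destruct (Req_dec t1 t3) as [->|d13]; [right; left; reflexivity|].
  destruct (Req_dec t2 t3) as [->|d23]; [right; right; reflexivity|].
  exfalso.
  destruct (per_j g kappa h c u1 u2 t1 Hg Hk Hh Hn (Tn _ N1) O1) as [P1 [S1 [A1 E1]]].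
  destruct (per_j g kappa h c u1 u2 t2 Hg Hk Hh Hn (Tn _ N2) O2) as [P2 [S2 [A2 E2]]].
  destruct (per_j g kappa h c u1 u2 t3 Hg Hk Hh Hn (Tn _ N3) O3) as [P3 [S3 [A3 E3]]].
  set (a := dot c (u1, u2)) in *.
  set (s1 := vnorm (vscale t1 (u1, u2))) in *.
  set (s2 := vnorm (vscale t2 (u1, u2))) in *.
  set (s3 := vnorm (vscale t3 (u1, u2))) in *.
  assert (D : forall ti tj si sj, ti <> tj -> si * si = ti * ti * (u1 ^ 2 + u2 ^ 2) ->
            sj * sj = tj * tj * (u1 ^ 2 + u2 ^ 2) -> 0 < ti * a -> 0 < tj * a -> si <> sj).
  { intros ti tj si sj dt Si Sj Ai Aj E. subst sj.
    assert (ti * ti = tj * tj).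
    { apply Rmult_eq_reg_r with (u1 ^ 2 + u2 ^ 2); lra. }
    assert ((ti - tj) * (ti + tj) = 0) by lra.
    apply Rmult_integral in H0. destruct H0 as [H0|H0]; [lra|].
    assert (tj = - ti) by lra. subst tj. nra. }
  apply (final g kappa h (u1 ^ 2 + u2 ^ 2) (a ^ 2) Hg Hk Hh Hn s1 s2 s3); auto.
  - exact (D t1 t2 s1 s2 d12 S1 S2 A1 A2).
  - exact (D t1 t3 s1 s3 d13 S1 S3 A1 A3).
  - exact (D t2 t3 s2 s3 d23 S2 S3 A2 A3).
Qed.
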